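(* Let $M$ be a $3$-connected matroid and let $C^*$ be a $4$-element cocircuit of $M$. If there are distinct elements $c',c''\in C^*$ such that neither $c'$ nor $c''$ is in a triangle of $M$, then $M/c$ is $3$-connected for some $c\in C^*$. *)

(* Defs.v *)
From HB Require Import structures.
From mathcomp Require Import all_boot all_order.
Set Implicit Arguments. Unset Strict Implicit. Unset Printing Implicit Defensive.

Section Matroids.
Variable T : finType.

(* (E, r) is a matroid on ground set E with rank function r (values of r on
   sets not contained in E are irrelevant). *)
Definition is_matroid (E : {set T}) (r : {set T} -> nat) : Prop :=
  [/\ forall X : {set T}, X \subset E -> r X <= #|X|,
      forall X Y : {set T}, Y \subset E -> X \subset Y -> r X <= r Y &
      forall X Y : {set T}, X \subset E -> Y \subset E ->
        r (X :|: Y) + r (X :&: Y) <= r X + r Y].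

Definition circuit (E : {set T}) (r : {set T} -> nat) (C : {set T}) : Prop :=
  [/\ C \subset E, r C < #|C| &
      forall D : {set T}, D \proper C -> r D = #|D|].

Definition dual_rank (E : {set T}) (r : {set T} -> nat) (X : {set T}) : nat :=
  #|X| + r (E :\: X) - r E.

Definition cocircuit (E : {set T}) (r : {set T} -> nat) (C : {set T}) : Prop :=
  circuit E (dual_rank E r) C.

Definition triangle (E : {set T}) (r : {set T} -> nat) (C : {set T}) : Prop :=
  circuit E r C /\ #|C| = 3.

Definition k_separation (E : {set T}) (r : {set T} -> nat) (k : nat)
    (X : {set T}) : Prop :=
  [/\ X \subset E, k <= #|X|, k <= #|E :\: X| &
      r X + r (E :\: X) < k + r E].

Definition three_connected (E : {set T}) (r : {set T} -> nat) : Prop :=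
  forall (k : nat) (X : {set T}), k < 3 -> ~ k_separation E r k X.

Definition contract_ground (E : {set T}) (c : T) : {set T} := E :\ c.
Definition contract_rank (r : {set T} -> nat) (c : T) (X : {set T}) : nat :=
  r (X :|: [set c]) - r [set c].

End Matroids.

(* Main.v *)
Require Import Defs.
From HB Require Import structures.
From mathcomp Require Import all_boot all_order.
From mathcomp Require Import zify.
From Stdlib Require Import Classical.
Set Implicit Arguments. Unset Strict Implicit. Unset Printing Implicit Defensive.

Ltac clean := repeat match goal with
  | h : is_true (_ \subset _) |- _ => clear h
  | h : is_true (_ \in _) |- _ => clear h
  | h : is_true (_ != _) |- _ => clear h
  | h : is_true (_ \proper _) |- _ => clear h
  | h : forall _, _ |- _ => clear h
  | h : @eq {set _} _ _ |- _ => clear h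
  | h : is_matroid _ _ |- _ => clear h
  | h : cocircuit _ _ _ |- _ => clear h
  | h : three_connected _ _ |- _ => clear h
  end.
Ltac slia := clean; lia.
Ltac revert_bool := repeat match goal with
  | h : is_true (_ \in _) |- _ => move: h
  | h : is_true (_ != _) |- _ => move: h
  | h : is_true (~~ _) |- _ => move: h
  end.
Ltac eqsplit x := repeat match goal with
  | |- context [x == ?p] => let h := fresh "h" in case: (eqVneq x p) => [->|h]; [|rewrite ?(negbTE h)]
  end.
Ltac neqcase a b := let h := fresh "h" in
  case h: (a == b); rewrite ?(eq_sym b a) ?h.
Ltac boolcase := match goal with
 | |- context [?a \in ?A] => case: (a \in A)
 | |- context [?a == ?b] => neqcase a b
 end.
Ltac inst x0 := repeat match goal with h : is_true (_ \subset _) |- _ => have := subsetP h x0; move/implyP; clear h end.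
Ltac bsolve := first [ by move=> /= | boolcase; bsolve ].
Ltac setfin x0 := inst x0; revert_bool; rewrite ?inE; eqsplit x0; revert_bool; rewrite ?inE ?eqxx; bsolve.
Ltac setsolve := let x0 := fresh "x" in apply/setP => x0; setfin x0.
Ltac subsolve := let x0 := fresh "x" in apply/subsetP => x0; setfin x0.


Section M.
Variables (T : finType) (E : {set T}) (r : {set T} -> nat).
Hypothesis HM : is_matroid E r.
Hypothesis H3 : three_connected E r.
Hypothesis HE4 : 4 <= #|E|.

Lemma rk_card (X : {set T}) : X \subset E -> r X <= #|X|.
Proof. by case: HM => h _ _; apply: h. Qed.
Lemma rk_mono (X Y : {set T}) : Y \subset E -> X \subset Y -> r X <= r Y.
Proof. by case: HM => _ h _; apply: h. Qed.
Lemma rk_sub (X Y : {set T}) : X \subset E -> Y \subset E ->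
  r (X :|: Y) + r (X :&: Y) <= r X + r Y.
Proof. by case: HM => _ _ h; apply: h. Qed.

Lemma rk_add (X : {set T}) x : X \subset E -> x \in E -> r (x |: X) <= r X + 1.
Proof.
move=> hX hx.
have h1 : [set x] \subset E by rewrite sub1set.
have := rk_sub h1 hX.
have := rk_card h1; rewrite cards1 => h2 h3; slia.
Qed.

Lemma cl_trans (A B : {set T}) x : B \subset E -> x \in E -> A \subset B ->
  r (x |: A) <= r A -> r (x |: B) <= r B.
Proof.
move=> hB hx hAB hA.
have hxA : x |: A \subset E by rewrite subUset sub1set hx (subset_trans hAB hB).
have := rk_sub hB hxA.
have -> : B :|: (x |: A) = x |: B.
  by rewrite setUCA (setUidPl hAB).
have : A \subset B :&: (x |: A) by rewrite subsetI hAB subsetUr.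
move=> /rk_mono h; have := h (subset_trans (subsetIl _ _) hB); slia.
Qed.

Lemma lam2 (A : {set T}) : A \subset E -> 2 <= #|A| -> 2 <= #|E :\: A| ->
  2 + r E <= r A + r (E :\: A).
Proof.
move=> hA h1 h2; have := H3 (k:=2) (X:=A) isT.
case: (leqP (2 + r E) (r A + r (E :\: A))) => // hlt hn.
by exfalso; apply: hn; split.
Qed.

Lemma lam1 (A : {set T}) : A \subset E -> 1 <= #|A| -> 1 <= #|E :\: A| ->
  1 + r E <= r A + r (E :\: A).
Proof.
move=> hA h1 h2; have := H3 (k:=1) (X:=A) isT.
case: (leqP (1 + r E) (r A + r (E :\: A))) => // hlt hn.
by exfalso; apply: hn; split.
Qed.

Lemma rkE_ge (X : {set T}) : X \subset E -> r X <= r E.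
Proof. by move=> h; apply: rk_mono. Qed.

Lemma rk1 x : x \in E -> r [set x] = 1.
Proof.
move=> hx.
have h1 : [set x] \subset E by rewrite sub1set.
have := rk_card h1; rewrite cards1 => hle.
have hc : #|E :\: [set x]| = #|E| - 1 by rewrite cardsDS // cards1.
have c1 : 1 <= #|[set x]| by rewrite cards1.
have c2 : 1 <= #|E :\: [set x]| by rewrite hc; slia.
have := lam1 h1 c1 c2.
have := rkE_ge (subsetDl E [set x]); slia.
Qed.

Lemma rk2 x y : x \in E -> y \in E -> x != y -> r [set x; y] = 2.
Proof.
move=> hx hy hxy.
have h1 : [set x; y] \subset E by rewrite subUset !sub1set hx hy.
have hc2 : #|[set x; y]| = 2 by rewrite cards2 hxy.
have := rk_card h1; rewrite hc2 => hle.
have hc : #|E :\: [set x; y]| = #|E| - 2 by rewrite cardsDS // hc2.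
have c1 : 2 <= #|[set x; y]| by rewrite hc2.
have c2 : 2 <= #|E :\: [set x; y]| by rewrite hc; slia.
have := lam2 h1 c1 c2.
have := rkE_ge (subsetDl E [set x; y]); slia.
Qed.

Lemma rk_small (D : {set T}) : D \subset E -> #|D| <= 2 -> r D = #|D|.
Proof.
move=> hD; rewrite leq_eqVlt ltnS leq_eqVlt ltnS leqn0.
case/or3P.
- case/cards2P => x [y [hxy hDe]]; subst D.
  rewrite cards2 hxy; apply: rk2 => //; apply: (subsetP hD); by rewrite !inE eqxx ?orbT.
- case/cards1P => x hDe; subst D; rewrite cards1 rk1 //; apply: (subsetP hD); exact: set11.
- move=> /eqP h0; have := rk_card hD; rewrite h0; slia.
Qed.

Lemma mk_tri (Tr : {set T}) : Tr \subset E -> #|Tr| = 3 -> r Tr <= 2 -> triangle E r Tr.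
Proof.
move=> hT hc hr; split => //; split => //.
- by rewrite hc.
- move=> D hD; apply: rk_small.
  + exact: subset_trans (proper_sub hD) hT.
  + by have := proper_card hD; rewrite hc.
Qed.

Definition notri x := forall Tr, triangle E r Tr -> x \notin Tr.

Lemma notri3 x (Tr : {set T}) : notri x -> Tr \subset E -> #|Tr| = 3 -> x \in Tr -> 3 <= r Tr.
Proof.
move=> hn hT hc hx; case: (leqP 3 (r Tr)) => // hlt.
have h2 : r Tr <= 2 by slia.
by have := hn _ (mk_tri hT hc h2); rewrite hx.
Qed.

Lemma cl2 x (A : {set T}) : notri x -> x \in E -> A \subset E -> x \notin A -> #|A| = 2 ->
  r (x |: A) <= r A -> False.
Proof.
move=> hn hx hA hxA hc hr.
have hT : x |: A \subset E by rewrite subUset sub1set hx hA.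
have hc3 : #|x |: A| = 3 by rewrite cardsU1 hxA hc.
have := notri3 hn hT hc3 (setU11 x A).
have := rk_card hA; rewrite hc; slia.
Qed.



Lemma cmpl1 z (S : {set T}) : z \in E -> S \subset E :\ z ->
  z |: ((E :\ z) :\: S) = E :\: S.
Proof. move=> *; setsolve. Qed.

Lemma cmpl2 z (S : {set T}) : S \subset E :\ z -> (E :\ z) :\: ((E :\ z) :\: S) = S.
Proof. move=> *; setsolve. Qed.

Lemma Ez_sub z : E :\ z \subset E.
Proof. exact: subD1set. Qed.

Lemma card_cmpl z (S : {set T}) : z \in E -> S \subset E :\ z ->
  #|S| + #|(E :\ z) :\: S| + 1 = #|E|.
Proof.
move=> hz hS.
have := cardsID S (E :\ z); rewrite (setIidPr hS) => ->.
by rewrite (cardsD1 z E) hz addnC.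
Qed.

Lemma one_side z (A : {set T}) : z \in E -> A \subset E :\ z -> #|A| = 1 ->
  r E + 2 <= r (z |: A) + r (z |: ((E :\ z) :\: A)).
Proof.
move=> hz hA /eqP /cards1P [s hs]; subst A.
have hsz : s \in E :\ z by rewrite -sub1set.
move: (hsz); rewrite !inE => /andP [hsz' hsE].
rewrite (cmpl1 hz hA).
have hzs : z != s by rewrite eq_sym.
rewrite rk2 //.
have h1 : [set s] \subset E by rewrite sub1set.
have hc : #|E :\: [set s]| = #|E| - 1 by rewrite cardsDS // cards1.
have c1 : 1 <= #|[set s]| by rewrite cards1.
have c2 : 1 <= #|E :\: [set s]| by rewrite hc; slia.
have := lam1 h1 c1 c2; rewrite rk1 //; slia.
Qed.

Lemma vsep z k (S : {set T}) : z \in E -> k < 3 ->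
  k_separation (E :\ z) (contract_rank r z) k S ->
  [/\ S \subset E :\ z, 2 <= #|S|, 2 <= #|(E :\ z) :\: S| &
      r (z |: S) + r (z |: ((E :\ z) :\: S)) <= r E + 2].
Proof.
move=> hz hk [hS hk1 hk2]; rewrite /contract_rank (rk1 hz).
rewrite [(E :\ z) :|: _]setUC (setD1K hz) ![_ :|: [set z]]setUC => hlt.
have hScS : (E :\ z) :\: S \subset E :\ z by apply: subsetDl.
have hScc := cmpl2 hS.
have hSE : S \subset E := subset_trans hS (Ez_sub z).
have hScE : (E :\ z) :\: S \subset E := subset_trans hScS (Ez_sub z).
have hz1 : [set z] \subset E by rewrite sub1set.
have hzS : z |: S \subset E by rewrite subUset hz1 hSE.
have hzSc : z |: ((E :\ z) :\: S) \subset E by rewrite subUset hz1 hScE.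
have m1 : 1 <= r (z |: S).
  by rewrite -(rk1 hz); apply: rk_mono => //; exact: subsetUl.
have m2 : 1 <= r (z |: ((E :\ z) :\: S)).
  by rewrite -(rk1 hz); apply: rk_mono => //; exact: subsetUl.
have mE : 1 <= r E by rewrite -(rk1 hz); apply: rk_mono => //.
have hsum : r (z |: S) + r (z |: ((E :\ z) :\: S)) <= r E + k by slia.
have k0 : 1 + r E <= r (z |: S) + r (z |: ((E :\ z) :\: S)).
  have := rk_sub hzS hzSc.
  have -> : (z |: S) :|: (z |: ((E :\ z) :\: S)) = E by setsolve.
  have -> : (z |: S) :&: (z |: ((E :\ z) :\: S)) = [set z] by setsolve.
  by rewrite rk1 //; slia.
case: (leqP 2 #|S|) => h2S; last first.
  have h1 : #|S| = 1 by slia.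
  have := one_side hz hS h1; slia.
case: (leqP 2 #|(E :\ z) :\: S|) => h2Sc; last first.
  have h1 : #|(E :\ z) :\: S| = 1 by slia.
  have := one_side hz hScS h1; rewrite hScc; slia.
split => //; slia.
Qed.

Lemma vsep_cl z (S : {set T}) : z \in E -> S \subset E :\ z -> 2 <= #|S| ->
  2 <= #|(E :\ z) :\: S| ->
  r (z |: S) + r (z |: ((E :\ z) :\: S)) <= r E + 2 -> r (z |: S) <= r S.
Proof.
move=> hz hS h1 h2 hs.
have hSE : S \subset E := subset_trans hS (Ez_sub z).
have hc := card_cmpl hz hS.
have hzn : z \notin (E :\ z) :\: S by rewrite !inE eqxx /= andbF.
have c2 : 2 <= #|E :\: S| by rewrite -(cmpl1 hz hS) cardsU1 hzn; slia.
have := lam2 hSE h1 c2; rewrite -(cmpl1 hz hS); slia.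
Qed.

Variable Cs : {set T}.
Hypothesis HC : cocircuit E r Cs.
Hypothesis HC4 : #|Cs| = 4.

Lemma CsE : Cs \subset E.
Proof. by case: HC. Qed.

Lemma rH_lt : r (E :\: Cs) < r E.
Proof. case: HC => _ h _; move: h; rewrite /dual_rank; slia. Qed.

Lemma rHx x : x \in Cs -> r E <= r (x |: (E :\: Cs)).
Proof.
move=> hx; case: HC => hCE _ h.
have := h _ (properD1 hx); rewrite /dual_rank.
have -> : E :\: (Cs :\ x) = x |: (E :\: Cs) by setsolve.
have := cardsD1 x Cs; rewrite hx HC4; slia.
Qed.

Lemma LH (A : {set T}) x : A \subset E :\: Cs -> x \in Cs -> r (x |: A) <= r A -> False.
Proof.
move=> hA hx h.
have hxE : x \in E := subsetP CsE x hx.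
have := cl_trans (subsetDl E Cs) hxE hA h.
have := rHx hx; have := rH_lt; slia.
Qed.

Lemma lemZ_pre e z (X : {set T}) :
  e \in Cs -> X \subset E :\ e -> 3 <= #|X| ->
  r (e |: X) <= r X -> r (e |: ((E :\ e) :\: X)) <= r ((E :\ e) :\: X) ->
  r X + r ((E :\ e) :\: X) <= r E + 2 ->
  z \in X -> z \in Cs -> (forall x, x \in X -> x \in Cs -> x = z) ->
  r (X :\ z) + 1 <= r X /\
  forall A : {set T}, A \subset e |: ((E :\ e) :\: X) -> r (z |: A) <= r A -> False.
Proof.
move=> heC hX h3X hXe hYe hsum hzX hzC hfun.
have heE : e \in E := subsetP CsE e heC.
have hXE : X \subset E := subset_trans hX (Ez_sub e).
have hzE : z \in E := subsetP hXE z hzX.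
have hX'H : X :\ z \subset E :\: Cs.
  apply/subsetP => x; rewrite !inE => /andP [hxz hxX].
  rewrite (subsetP hXE x hxX) andbT; apply/negP => hxC.
  by rewrite (hfun x hxX hxC) eqxx in hxz.
have hX'E : X :\ z \subset E := subset_trans (subD1set X z) hXE.
have Z1 : r (X :\ z) + 1 <= r X.
  case: (leqP (r (X :\ z) + 1) (r X)) => // hlt; exfalso.
  apply: (LH hX'H heC).
  have h1 : e |: (X :\ z) \subset e |: X by apply: setUS; exact: subD1set.
  have hex : e |: X \subset E by rewrite subUset sub1set heE hXE.
  have := rk_mono hex h1; slia.
split => //.
set Y := (E :\ e) :\: X in hYe hsum *.
have hYE : Y \subset E := subset_trans (subsetDl _ _) (Ez_sub e).
have hWE : e |: Y \subset E by rewrite subUset sub1set heE hYE.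
have hcX := card_cmpl heE hX; rewrite -/Y in hcX.
have hcX' : #|X :\ z| + 1 = #|X| by have := cardsD1 z X; rewrite hzX; slia.
have hEX : E :\: (X :\ z) = z |: (e |: Y) by rewrite /Y; clear -hzX hX heE; setsolve.
have hcEX : 2 <= #|E :\: (X :\ z)|.
  rewrite cardsDS //; slia.
have hc2 : 2 <= #|X :\ z| by slia.
have := lam2 hX'E hc2 hcEX; rewrite hEX => hlam.
have hWY : r (e |: Y) <= r Y := hYe.
move=> A hA hcl.
have := cl_trans hWE hzE hA hcl; slia.
Qed.

Lemma lemZ e z (X : {set T}) : e \in Cs -> notri e -> notri z ->
  X \subset E :\ e -> 3 <= #|X| -> 3 <= #|(E :\ e) :\: X| ->
  r (e |: X) <= r X -> r (e |: ((E :\ e) :\: X)) <= r ((E :\ e) :\: X) ->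
  r X + r ((E :\ e) :\: X) <= r E + 2 ->
  z \in X -> z \in Cs -> (forall x, x \in X -> x \in Cs -> x = z) ->
  three_connected (E :\ z) (contract_rank r z).
Proof.
move=> heC hne hnz hX h3X h3Y hXe hYe hsum hzX hzC hfun.
have [Z1 ZW] := lemZ_pre heC hX h3X hXe hYe hsum hzX hzC hfun.
have heE : e \in E := subsetP CsE e heC.
have hXE : X \subset E := subset_trans hX (Ez_sub e).
have hzE : z \in E := subsetP hXE z hzX.
have hX'H : X :\ z \subset E :\: Cs.
  apply/subsetP => x; rewrite !inE => /andP [hxz hxX].
  rewrite (subsetP hXE x hxX) andbT; apply/negP => hxC.
  by rewrite (hfun x hxX hxC) eqxx in hxz.
have ZX : forall A : {set T}, A \subset X :\ z -> r (z |: A) <= r A -> False.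
  move=> A hA; apply: LH hzC; exact: subset_trans hA hX'H.
have hX'E : X :\ z \subset E := subset_trans (subD1set X z) hXE.
have heX : e \notin X by apply/negP => /(subsetP hX); rewrite !inE eqxx.
have hze : z != e by apply/negP => /eqP h; subst; rewrite hzX in heX.
set Y := (E :\ e) :\: X in h3Y hYe hsum ZW.
set X' := X :\ z in Z1 hX'H ZX hX'E.
set W := e |: Y in ZW hYe.
have hYE : Y \subset E := subset_trans (subsetDl _ _) (Ez_sub e).
have hWE : W \subset E by rewrite subUset sub1set heE hYE.
have hcX := card_cmpl heE hX; rewrite -/Y in hcX.
have hcX' : #|X'| + 1 = #|X| by have := cardsD1 z X; rewrite hzX -/X' /=; slia.
have heY : e \notin Y by rewrite /Y !inE eqxx /= andbF.
have hcW : #|W| = #|Y| + 1 by rewrite /W cardsU1 heY; slia.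
have hzW : z |: W = E :\: X' by rewrite /W /Y /X'; clear -hzX hX heE; setsolve.
have rzW : r (z |: W) <= r Y + 1.
  have := rk_add hWE hzE; slia.
move=> k S hk hks.
have [hS h2S h2Sc hs] := vsep hzE hk hks.
set Sc := (E :\ z) :\: S in h2Sc hs.
have hScS : Sc \subset E :\ z by apply: subsetDl.
have hScc : (E :\ z) :\: Sc = S by apply: cmpl2.
have hSE : S \subset E := subset_trans hS (Ez_sub z).
have hScE : Sc \subset E := subset_trans hScS (Ez_sub z).
have clS : r (z |: S) <= r S by apply: vsep_cl.
have clSc : r (z |: Sc) <= r Sc.
  apply: vsep_cl => //; rewrite hScc //; slia.
have hzS : z \notin S by apply/negP => /(subsetP hS); rewrite !inE eqxx.
have hzSc : z \notin Sc by rewrite /Sc !inE eqxx andbF.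
have h3S : 3 <= #|S|.
  case: (leqP 3 #|S|) => // hlt; exfalso.
  apply: (cl2 hnz hzE hSE hzS _ clS); slia.
have h3Sc : 3 <= #|Sc|.
  case: (leqP 3 #|Sc|) => // hlt; exfalso.
  apply: (cl2 hnz hzE hScE hzSc _ clSc); slia.
have hcS := card_cmpl hzE hS; rewrite -/Sc in hcS.
have quad : forall S1 : {set T}, S1 \subset E :\ z ->
    r (z |: S1) + r (z |: ((E :\ z) :\: S1)) <= r E + 2 ->
    2 <= #|S1 :&: X'| -> 2 <= #|((E :\ z) :\: S1) :\: X'| -> False.
  move=> S1 hS1 hs1 ha hd.
  set S2 := (E :\ z) :\: S1 in hs1 hd.
  set a := S1 :&: X' in ha.
  set d := S2 :\: X' in hd.
  have hS1E : S1 \subset E := subset_trans hS1 (Ez_sub z).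
  have hS2E : S2 \subset E := subset_trans (subsetDl _ _) (Ez_sub z).
  have hz1 : [set z] \subset E by rewrite sub1set.
  have hzS1 : z |: S1 \subset E by rewrite subUset hz1 hS1E.
  have hzS2 : z |: S2 \subset E by rewrite subUset hz1 hS2E.
  have hzX' : z |: X' \subset E by rewrite subUset hz1 hX'E.
  have hzW' : z |: W \subset E by rewrite subUset hz1 hWE.
  have s1 := rk_sub hzS1 hzX'.
  have s2 := rk_sub hzS2 hzW'.
  have e1 : (z |: S1) :|: (z |: X') = E :\: d.
    rewrite /d /S2 /X'; clear -hS1 hX heE hzX; setsolve.
  have e2 : (z |: S1) :&: (z |: X') = z |: a.
    rewrite /a /X'; clear -hS1 hX heE hzX; setsolve.
  have e3 : (z |: S2) :|: (z |: W) = E :\: a.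
    rewrite /a /S2 /X' /W /Y; clear -hS1 hX heE hzX; setsolve.
  have e4 : (z |: S2) :&: (z |: W) = z |: d.
    rewrite /d /S2 /X' /W /Y; clear -hS1 hX heE hzX; setsolve.
  have e5 : z |: X' = X by rewrite /X' setD1K.
  rewrite e1 e2 e5 in s1; rewrite e3 e4 in s2.
  have haX : a \subset X' by apply: subsetIr.
  have hdW : d \subset W.
    rewrite /d /S2 /X' /W /Y; clear -hS1 hX heE hzX; subsolve.
  have ra : r a + 1 <= r (z |: a).
    case: (leqP (r a + 1) (r (z |: a))) => // hlt; exfalso; apply: (ZX a) => //; slia.
  have rd : r d + 1 <= r (z |: d).
    case: (leqP (r d + 1) (r (z |: d))) => // hlt; exfalso; apply: (ZW d) => //; slia.
  have haE : a \subset E := subset_trans haX hX'E.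
  have hdE : d \subset E := subset_trans hdW hWE.
  have ca : 2 <= #|E :\: a|.
    rewrite cardsDS //; have := subset_leq_card haX; slia.
  have cd : 2 <= #|E :\: d|.
    rewrite cardsDS //; have := subset_leq_card hdW; slia.
  have la := lam2 haE ha ca.
  have ld := lam2 hdE hd cd.
  slia.
have cSa := cardsID X' S.
have cSca := cardsID X' Sc.
have cX' := cardsID S X'.
have eX'S : X' :\: S = Sc :&: X'.
  rewrite /Sc /X'; clear -hS hX heE hzX hze; setsolve.
rewrite setIC eX'S in cX'.
have cW := cardsID S W.
have eWS : W :&: S = S :\: X'.
  rewrite /W /Y /X'; clear -hS hX heE hzX hze; setsolve.
have eWS' : W :\: S = Sc :\: X'.
  rewrite /W /Y /X' /Sc; clear -hS hX heE hzX hze; setsolve.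
rewrite eWS eWS' in cW.
have q1 : ~ (2 <= #|S :&: X'| /\ 2 <= #|Sc :\: X'|).
  by case=> h1 h2; apply: (quad S).
have q2 : ~ (2 <= #|Sc :&: X'| /\ 2 <= #|S :\: X'|).
  case=> h1 h2; apply: (quad Sc) => //; rewrite hScc //; slia.
have hsa : #|S :&: X'| = 1.
  case: (leqP 2 #|S :&: X'|) => ha.
  - exfalso; case: (leqP 2 #|Sc :\: X'|) => hd; first by apply: q1.
    case: (leqP 2 #|Sc :&: X'|) => hb; last by slia.
    case: (leqP 2 #|S :\: X'|) => hc; first by apply: q2.
    slia.
  - case: (leqP 2 #|Sc :&: X'|) => hb; last by slia.
    exfalso; case: (leqP 2 #|S :\: X'|) => hc; first by apply: q2.
    slia.
have hsb : #|Sc :&: X'| = 1 by slia.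
have hX3 : #|X| = 3 by slia.
have hXEe : e |: X \subset E by rewrite subUset sub1set heE hXE.
have fin : forall (S1 : {set T}) (s t : T), S1 \subset E :\ z ->
    r (z |: S1) + r (z |: ((E :\ z) :\: S1)) <= r E + 2 ->
    3 <= #|S1| -> 2 <= #|(E :\ z) :\: S1| ->
    r (z |: ((E :\ z) :\: S1)) <= r ((E :\ z) :\: S1) ->
    S1 :&: X' = [set s] -> t \in ((E :\ z) :\: S1) :&: X' ->
    e \in (E :\ z) :\: S1 -> False.
  move=> S1 s t hS1 hs1 h3 h2 cl2' ha ht heS2.
  set S2 := (E :\ z) :\: S1 in hs1 h2 cl2' ht heS2.
  have hsa0 : s \in S1 :&: X' by rewrite ha set11.
  move: (hsa0); rewrite inE => /andP [hsS1 hsX'].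
  move: (ht); rewrite inE => /andP [htS2 htX'].
  have hsX : s \in X by move: hsX'; rewrite /X' !inE => /andP [? ?].
  have htX : t \in X by move: htX'; rewrite /X' !inE => /andP [? ?].
  have htz : t != z by move: htX'; rewrite /X' !inE => /andP [? ?].
  have hte : t != e by apply/negP => /eqP h; move: htX; rewrite h (negbTE heX).
  have htE : t \in E := subsetP hXE t htX.
  have hsE : s \in E := subsetP hXE s hsX.
  have hS1E : S1 \subset E := subset_trans hS1 (Ez_sub z).
  have hS2E : S2 \subset E := subset_trans (subsetDl _ _) (Ez_sub z).
  set Tr := z |: (e |: [set t]).
  have hTrE : Tr \subset E by rewrite /Tr !subUset !sub1set hzE heE htE.
  have hTc : #|Tr| = 3.
    rewrite /Tr cardsU1 cardsU1 cards1 !inE (negbTE hze) eq_sym (negbTE htz) eq_sym (negbTE hte) /=; done.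
  have heT : e \in Tr by rewrite /Tr !inE eqxx orbT.
  have h3T := notri3 hne hTrE hTc heT.
  have hsT : s |: Tr \subset e |: X.
    rewrite /Tr; clear -hsX htX hzX; subsolve.
  have := rk_mono hXEe hsT.
  have := rk_card hXE; rewrite hX3 => hXc hsTr.
  have hcl : r (s |: Tr) <= r Tr by slia.
  have hTS2 : Tr \subset z |: S2.
    rewrite /Tr; clear -htS2 heS2; subsolve.
  have hzS2E : z |: S2 \subset E by rewrite subUset sub1set hzE hS2E.
  have c1 := cl_trans hzS2E hsE hTS2 hcl.
  set A0 := S1 :\ s.
  have hA0a : A0 \subset S1 :\: X'.
    apply/subsetP => x; rewrite !inE => /andP [hxs hxS1]; rewrite hxS1 andbT.
    apply/negP => hx.
    have : x \in S1 :&: X' by rewrite /X' !inE hxS1 /= hx.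
    by rewrite ha inE (negbTE hxs).
  have hA0W : A0 \subset W.
    apply: subset_trans hA0a _.
    rewrite /X' /W /Y; clear -hS1 hX heE hzX hze; subsolve.
  have hA0E : A0 \subset E := subset_trans hA0W hWE.
  have hcA0 : #|A0| + 1 = #|S1| by have := cardsD1 s S1; rewrite hsS1 -/A0 /=; slia.
  have hEA0 : E :\: A0 = s |: (z |: S2).
    rewrite /A0 /S2; clear -hS1 hsS1 hzE; setsolve.
  have hcc := card_cmpl hzE hS1; rewrite -/S2 in hcc.
  have c2 : 2 <= #|E :\: A0| by rewrite cardsDS //; slia.
  have c3 : 2 <= #|A0| by slia.
  have := lam2 hA0E c3 c2; rewrite hEA0 => hl.
  have hzS1E : z |: S1 \subset E by rewrite subUset sub1set hzE hS1E.
  have m1 : r (z |: A0) <= r (z |: S1).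
    apply: rk_mono => //; apply: setUS; exact: subD1set.
  have m2 : r S2 <= r (z |: S2) by apply: rk_mono => //; exact: subsetUr.
  have m3 : r A0 + 1 <= r (z |: A0).
    case: (leqP (r A0 + 1) (r (z |: A0))) => // hlt; exfalso; apply: (ZW A0) => //; slia.
  slia.
have /cards1P [s hs1] : #|S :&: X'| == 1 by rewrite hsa.
have /cards1P [t ht] : #|Sc :&: X'| == 1 by rewrite hsb.
have heEz : e \in E :\ z by rewrite !inE eq_sym hze heE.
case: (boolP (e \in S)) => heS.
- apply: (fin Sc t s hScS) => //; rewrite ?hScc //.
  + rewrite addnC; exact: hs.
  + by rewrite hs1 set11.
- have heSc : e \in Sc by rewrite /Sc inE heS heEz.
  apply: (fin S s t hS) => //; rewrite -/Sc //.
  by rewrite -/Sc ht set11.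
Qed.

Lemma cont c' c'' (X : {set T}) : c' \in Cs -> c'' \in Cs -> c' != c'' ->
  notri c' -> notri c'' ->
  X \subset E :\ c' -> 3 <= #|X| -> 3 <= #|(E :\ c') :\: X| ->
  r (c' |: X) <= r X -> r (c' |: ((E :\ c') :\: X)) <= r ((E :\ c') :\: X) ->
  r X + r ((E :\ c') :\: X) <= r E + 2 ->
  #|X :&: Cs| = 1 ->
  exists c, c \in Cs /\ three_connected (E :\ c) (contract_rank r c).
Proof.
move=> hc'C hc''C hne hn' hn'' hX h3X h3Y hXe hYe hsum /eqP /cards1P [z hz].
have hzXC : z \in X :&: Cs by rewrite hz set11.
move: (hzXC); rewrite inE => /andP [hzX hzC].
have hfun : forall x, x \in X -> x \in Cs -> x = z.
  move=> x hx hxC; have : x \in X :&: Cs by rewrite inE hx hxC.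
  by rewrite hz inE => /eqP.
case: (classic (notri z)) => hnz.
  by exists z; split => //; apply: (lemZ hc'C hn' hnz hX).
have [Tr [hT hzT]] : exists Tr, triangle E r Tr /\ z \in Tr.
  apply: NNPP => hn; apply: hnz => Tr hT; apply/negP => hz'; apply: hn; exists Tr; done.
have [[hTE hTr hTmin] hT3] := hT.
have hc'E : c' \in E := subsetP CsE c' hc'C.
have hc''E : c'' \in E := subsetP CsE c'' hc''C.
have hXE : X \subset E := subset_trans hX (Ez_sub c').
have hzE : z \in E := subsetP hXE z hzX.
have hTz2 : r (Tr :\ z) = 2.
  rewrite (hTmin _ (properD1 hzT)); have := cardsD1 z Tr; rewrite hzT hT3 /=; slia.
have hTz : r (z |: (Tr :\ z)) <= r (Tr :\ z) by rewrite setD1K //; slia.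
have [_ ZW] := lemZ_pre hc'C hX h3X hXe hYe hsum hzX hzC hfun.
set Y := (E :\ c') :\: X in h3Y hYe hsum ZW.
have hTzE : Tr :\ z \subset E := subset_trans (subD1set Tr z) hTE.
have : (Tr :\ z) :&: Cs != set0.
  apply/negP => /eqP h0; apply: (LH _ hzC hTz).
  apply/subsetP => x hx; rewrite inE (subsetP hTzE x hx) andbT.
  apply/negP => hxC; have : x \in (Tr :\ z) :&: Cs by rewrite inE hx hxC.
  by rewrite h0 inE.
case/set0Pn => t; rewrite !inE => /andP [/andP [htz htT] htC].
have htE : t \in E := subsetP hTE t htT.
have htc' : t != c' by apply/negP => /eqP h; move: (hn' Tr hT); rewrite -h htT.
have htc'' : t != c'' by apply/negP => /eqP h; move: (hn'' Tr hT); rewrite -h htT.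
have htX : t \notin X by apply/negP => h; move: (hfun t h htC) => h'; rewrite h' eqxx in htz.
have htY : t \in Y by rewrite /Y !inE htX htc' htE.
have : ~~ (Tr :\ z \subset c' |: Y).
  apply/negP => hsub; apply: (ZW _ hsub hTz).
case/subsetPn => w hw hwn.
move: hw; rewrite !inE => /andP [hwz hwT].
have hwE : w \in E := subsetP hTE w hwT.
have hwX : w \in X.
  case: (boolP (w \in X)) => // hwX; exfalso; move: hwn; rewrite /Y !inE hwX hwE /=.
  by case: (w == c').
have hzw : z != w by rewrite eq_sym.
have hsub3 : t |: [set z; w] \subset Tr.
  by rewrite !subUset !sub1set htT hzT hwT.
have hzwE : [set z; w] \subset E by rewrite subUset !sub1set hzE hwE.
have hr3 : r (t |: [set z; w]) <= r [set z; w].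
  rewrite rk2 //; have := rk_mono hTE hsub3; slia.
have hzwX : [set z; w] \subset X by rewrite subUset !sub1set hzX hwX.
have htXcl := cl_trans hXE htE hzwX hr3.
have hYE : Y \subset E := subset_trans (subsetDl _ _) (Ez_sub c').
have hY'S : Y :\ t \subset E :\ c' := subset_trans (subD1set Y t) (subsetDl _ _).
have hY'E : Y :\ t \subset E := subset_trans hY'S (Ez_sub c').
have hcmp : (E :\ c') :\: (Y :\ t) = t |: X.
  rewrite /Y; clear -hX htE htc' htX; setsolve.
have htXE : t |: X \subset E by rewrite subUset sub1set htE hXE.
have hc'tX : r (c' |: (t |: X)) <= r (t |: X).
  apply: (cl_trans htXE hc'E _ hXe); exact: subsetUr.
have hEY' : E :\: (Y :\ t) = c' |: (t |: X).
  rewrite /Y; clear -hX htE htc' htX hc'E; setsolve.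
have hcY := card_cmpl hc'E hX; rewrite -/Y in hcY.
have hcY' : #|Y :\ t| + 1 = #|Y| by have := cardsD1 t Y; rewrite htY /=; slia.
have c1 : 2 <= #|Y :\ t| by slia.
have c2 : 2 <= #|E :\: (Y :\ t)| by rewrite cardsDS //; slia.
have := lam2 hY'E c1 c2; rewrite hEY' => hl.
have m1 : r (Y :\ t) <= r Y by apply: rk_mono => //; exact: subD1set.
have hc'YE : c' |: Y \subset E by rewrite subUset sub1set hc'E hYE.
have m2 : r (c' |: (Y :\ t)) <= r (c' |: Y).
  by apply: rk_mono => //; apply: setUS; exact: subD1set.
have hY'cl : r (c' |: (Y :\ t)) <= r (Y :\ t) by slia.
have hc'Y' : c' \notin Y :\ t by rewrite !inE eqxx /= !andbF.
have h3Y' : 3 <= #|Y :\ t|.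
  case: (leqP 3 #|Y :\ t|) => // hlt; exfalso.
  apply: (cl2 hn' hc'E hY'E hc'Y' _ hY'cl); slia.
have h3tX : 3 <= #|t |: X| by rewrite cardsU1 htX; slia.
have htXr : r (t |: X) <= r X by [].
have hc''X : c'' \notin X.
  apply/negP => h; move: (hfun c'' h hc''C) => h'; move: (hn'' Tr hT); by rewrite h' hzT.
have hc''Y' : c'' \in Y :\ t.
  by rewrite /Y !inE eq_sym htc'' hc''X eq_sym hne hc''E.
have hfun'' : forall x, x \in Y :\ t -> x \in Cs -> x = c''.
  move=> x hx hxC.
  have hxc' : x != c' by move: hx; rewrite /Y !inE => /and3P [_ _ /andP []].
  have hxz : x != z.
    apply/negP => /eqP h; move: hx; rewrite /Y h !inE hzX /= andbF //.
  have hxt : x != t by move: hx; rewrite !inE => /andP [].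
  have hzc' : z != c' by apply/negP => /eqP h; move: (subsetP hX z hzX); rewrite h !inE eqxx.
  set K := ((Cs :\ c') :\ z) :\ t.
  have hK1 : #|K| = 1.
    have := cardsD1 c' Cs; rewrite hc'C HC4 => h1.
    have := cardsD1 z (Cs :\ c'); rewrite !inE hzc' hzC /= => h2.
    have := cardsD1 t ((Cs :\ c') :\ z); rewrite !inE htz htc' htC /= => h3.
    rewrite /K; slia.
  have /cards1P [y hy] : #|K| == 1 by rewrite hK1.
  have hc''z : c'' != z by apply/negP => /eqP h; move: hc''X; rewrite h hzX.
  have hc''K : c'' \in K
    by rewrite /K !inE hc''C (eq_sym c'' t) htc'' hc''z (eq_sym c'' c') hne.
  have hxK : x \in K by rewrite /K !inE hxt hxz hxc' hxC.
  move: hc''K hxK; rewrite hy !inE => /eqP -> /eqP -> //.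
exists c''; split => //.
apply: (lemZ (X := Y :\ t) hc'C hn' hn'' hY'S h3Y') => //; rewrite ?hcmp //.
slia.
Qed.

Lemma main_sec c' c'' : c' \in Cs -> c'' \in Cs -> c' != c'' ->
  notri c' -> notri c'' ->
  exists c, c \in Cs /\ three_connected (E :\ c) (contract_rank r c).
Proof.
move=> hc'C hc''C hne hn' hn''.
case: (classic (three_connected (E :\ c') (contract_rank r c'))) => h.
  by exists c'.
have [k [S [hk hks]]] : exists k S, k < 3 /\ k_separation (E :\ c') (contract_rank r c') k S.
  apply: NNPP => hn; apply: h => k S hk hs; apply: hn; exists k, S; done.
have hc'E : c' \in E := subsetP CsE c' hc'C.
have [hS h2S h2Sc hs] := vsep hc'E hk hks.
set Sc := (E :\ c') :\: S in h2Sc hs.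
have hScS : Sc \subset E :\ c' by apply: subsetDl.
have hScc : (E :\ c') :\: Sc = S by apply: cmpl2.
have hSE : S \subset E := subset_trans hS (Ez_sub c').
have hScE : Sc \subset E := subset_trans hScS (Ez_sub c').
have clS : r (c' |: S) <= r S by apply: vsep_cl.
have clSc : r (c' |: Sc) <= r Sc.
  apply: vsep_cl => //; rewrite hScc //; slia.
have hcS : c' \notin S by apply/negP => /(subsetP hS); rewrite !inE eqxx.
have hcSc : c' \notin Sc by rewrite /Sc !inE eqxx andbF.
have h3S : 3 <= #|S|.
  case: (leqP 3 #|S|) => // hlt; exfalso.
  apply: (cl2 hn' hc'E hSE hcS _ clS); slia.
have h3Sc : 3 <= #|Sc|.
  case: (leqP 3 #|Sc|) => // hlt; exfalso.
  apply: (cl2 hn' hc'E hScE hcSc _ clSc); slia.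
have hCE := CsE.
have cK := cardsID S (Cs :\ c').
have e1 : (Cs :\ c') :&: S = S :&: Cs by clear -hS; setsolve.
have e2 : (Cs :\ c') :\: S = Sc :&: Cs by rewrite /Sc; clear -hS hCE; setsolve.
rewrite e1 e2 in cK.
have cC := cardsD1 c' Cs; rewrite hc'C HC4 /= in cC.
have n1 : 1 <= #|S :&: Cs|.
  rewrite lt0n; apply/negP => /eqP /cards0_eq h0; apply: (LH _ hc'C clS).
  apply/subsetP => x hx; rewrite inE (subsetP hSE x hx) andbT.
  apply/negP => hxC; have : x \in S :&: Cs by rewrite inE hx hxC.
  by rewrite h0 inE.
have n2 : 1 <= #|Sc :&: Cs|.
  rewrite lt0n; apply/negP => /eqP /cards0_eq h0; apply: (LH _ hc'C clSc).
  apply/subsetP => x hx; rewrite inE (subsetP hScE x hx) andbT.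
  apply/negP => hxC; have : x \in Sc :&: Cs by rewrite inE hx hxC.
  by rewrite h0 inE.
have ScE' : r S + r Sc <= r E + 2.
  have h1 : c' |: S \subset E by rewrite subUset sub1set hc'E hSE.
  have h2 : c' |: Sc \subset E by rewrite subUset sub1set hc'E hScE.
  have := rk_mono h1 (subsetUr [set c'] S).
  have := rk_mono h2 (subsetUr [set c'] Sc); slia.
case: (leqP #|S :&: Cs| 1) => hn1.
- apply: (cont hc'C hc''C hne hn' hn'' hS) => //; slia.
- apply: (cont hc'C hc''C hne hn' hn'' hScS) => //; rewrite ?hScc //; slia.
Qed.

End M.

Unset Implicit Arguments.
Set Strict Implicit.

Theorem lemma4p5 (T : finType) (E : {set T}) (r : {set T} -> nat)
  (HM : is_matroid E r) (H3 : three_connected E r)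
  (Cs : {set T}) (HC : cocircuit E r Cs) (H4 : #|Cs| = 4)
  (c' c'' : T) (Hc' : c' \in Cs) (Hc'' : c'' \in Cs) (Hne : c' != c'')
  (Ht' : forall Tr : {set T}, triangle E r Tr -> c' \notin Tr)
  (Ht'' : forall Tr : {set T}, triangle E r Tr -> c'' \notin Tr) :
  exists c, c \in Cs /\
    three_connected (contract_ground E c) (contract_rank r c).
Proof.
have hCE : Cs \subset E by case: HC.
have HE4 : 4 <= #|E| by rewrite -H4; apply: subset_leq_card.
exact: (main_sec HM H3 HE4 HC H4 Hc' Hc'' Hne Ht' Ht'').
Qed.
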